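(* Let $n,m\ge1$, $a\in\mathbb{R}^n$ with $\|a\|=1$, $d\in\mathbb{R}^m$ with $\|d\|<1$, and $\lambda\in\mathbb{R}^n$ with $\|\lambda\|=1$ and $\lambda\neq\pm a$. Let $$C=\{(x,y)\in\mathbb{R}^{n+m} : -\lambda^\mathsf{T} x+\nabla\phi_\lambda(\beta)^\mathsf{T} y\le r(\beta)\ \text{ for all }\beta\in\mathbb{R}^m,\ \|\beta\|=1\}$$ and $S=\{(x,y)\in\mathbb{R}^{n+m}:\|x\|\le\|y\|,\ a^\mathsf{T} x+d^\mathsf{T} y=-1\}$. Then $C$ is $S$-free, i.e. $\operatorname{int}(C)\cap S=\emptyset$.
   Context: $\|\cdot\|$ is the Euclidean norm. For $y\in\mathbb{R}^m$, $\phi_\lambda(y)=\max\{\lambda^\mathsf{T} x : x\in\mathbb{R}^n,\ \|x\|\le\|y\|,\ a^\mathsf{T} x+d^\mathsf{T} y\le 0\}$; under the hypotheses this is a finite convex function differentiable on $\mathbb{R}^m\setminus\{0\}$, and $\nabla\phi_\lambda(\beta)$ denotes its gradient. For $\|\beta\|=1$, $r(\beta)=0$ if $\lambda^\mathsf{T} a+d^\mathsf{T}\beta\le0$, and otherwise $r(\beta)=\dfrac{d^\mathsf{T}\beta+\lambda^\mathsf{T} a\,\phi_\lambda(\beta)}{\phi_\lambda(\beta)+d^\mathsf{T}\beta\,\lambda^\mathsf{T} a}$. *)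

(* Defs.v *)
From HB Require Import structures.
From mathcomp Require Import all_boot all_order all_algebra.
From mathcomp Require Import all_classical all_reals all_analysis.
Set Implicit Arguments. Unset Strict Implicit. Unset Printing Implicit Defensive.
Import Order.TTheory GRing.Theory Num.Theory.
Import numFieldNormedType.Exports.
Local Open Scope classical_set_scope.
Local Open Scope ring_scope.

Section Defs.
Variable R : realType.

Definition dotp (k : nat) (u v : 'rV[R]_k) : R := \sum_(i < k) u 0 i * v 0 i.
Definition enorm (k : nat) (u : 'rV[R]_k) : R := Num.sqrt (dotp u u).

Definition phi (n m : nat) (a lam : 'rV[R]_n) (d : 'rV[R]_m) (y : 'rV[R]_m) : R :=
  sup [set dotp lam x | x in [set x : 'rV[R]_n | enorm x <= enorm y /\
                                                 dotp a x + dotp d y <= 0]].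

(* gradient = vector of partial derivatives (phi is differentiable off 0) *)
Definition grad_phi (n m : nat) (a lam : 'rV[R]_n) (d : 'rV[R]_m) (beta : 'rV[R]_m)
  : 'rV[R]_m :=
  \row_(j < m) derive (phi a lam d) beta (delta_mx 0 j : 'rV[R]_m).

Definition rfun (n m : nat) (a lam : 'rV[R]_n) (d : 'rV[R]_m) (beta : 'rV[R]_m) : R :=
  if dotp lam a + dotp d beta <= 0 then 0
  else (dotp d beta + dotp lam a * phi a lam d beta) /
       (phi a lam d beta + dotp d beta * dotp lam a).

Definition Cset (n m : nat) (a lam : 'rV[R]_n) (d : 'rV[R]_m)
  : set ('rV[R]_n * 'rV[R]_m) :=
  [set z | forall beta : 'rV[R]_m, enorm beta = 1 ->
      - dotp lam z.1 + dotp (grad_phi a lam d beta) z.2 <= rfun a lam d beta].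

Definition Sset (n m : nat) (a : 'rV[R]_n) (d : 'rV[R]_m)
  : set ('rV[R]_n * 'rV[R]_m) :=
  [set z | enorm z.1 <= enorm z.2 /\ dotp a z.1 + dotp d z.2 = -1].

End Defs.

(* Main.v *)
Require Import Defs.
From HB Require Import structures.
From mathcomp Require Import all_boot all_order all_algebra.
From mathcomp Require Import all_classical all_reals all_analysis.
From mathcomp Require Import ring lra.
Set Implicit Arguments. Unset Strict Implicit. Unset Printing Implicit Defensive.
Import Order.TTheory GRing.Theory Num.Theory.
Import numFieldNormedType.Exports.
Local Open Scope classical_set_scope.
Local Open Scope ring_scope.

Section Dot.
Context {R : realType} {k : nat}.
Implicit Types u v w : 'rV[R]_k.

Lemma dotpC u v : dotp u v = dotp v u.
Proof. by apply: eq_bigr => i _; rewrite mulrC. Qed.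
Lemma dotpDl u v w : dotp (u + v) w = dotp u w + dotp v w.
Proof. by rewrite /dotp -big_split; apply: eq_bigr => i _; rewrite !mxE mulrDl. Qed.
Lemma dotpZl s u v : dotp (s *: u) v = s * dotp u v.
Proof. by rewrite /dotp mulr_sumr; apply: eq_bigr => i _; rewrite !mxE mulrA. Qed.
Lemma dotpNl u v : dotp (- u) v = - dotp u v.
Proof. by rewrite -scaleN1r dotpZl mulN1r. Qed.
Lemma dotpDr u v w : dotp w (u + v) = dotp w u + dotp w v.
Proof. by rewrite dotpC dotpDl !(dotpC w). Qed.
Lemma dotpZr s u v : dotp v (s *: u) = s * dotp v u.
Proof. by rewrite dotpC dotpZl dotpC. Qed.
Lemma dotpNr u v : dotp v (- u) = - dotp v u.
Proof. by rewrite dotpC dotpNl dotpC. Qed.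
Lemma dotpBl u v w : dotp (u - v) w = dotp u w - dotp v w.
Proof. by rewrite dotpDl dotpNl. Qed.
Lemma dotpBr u v w : dotp w (u - v) = dotp w u - dotp w v.
Proof. by rewrite dotpDr dotpNr. Qed.
Lemma dotp0l u : dotp 0 u = 0.
Proof. by rewrite /dotp big1 // => i _; rewrite mxE mul0r. Qed.
Lemma dotpp_ge0 u : 0 <= dotp u u.
Proof. by apply: sumr_ge0 => i _; rewrite -expr2 sqr_ge0. Qed.
Lemma dotpp_eq0 u : dotp u u = 0 -> u = 0.
Proof.
move=> /eqP; rewrite psumr_eq0 => [/allP H|i _]; last by rewrite -expr2 sqr_ge0.
apply/rowP => i; rewrite mxE; have := H i (mem_index_enum _).
by rewrite implyTb mulf_eq0 orbb => /eqP.
Qed.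
Lemma enorm_ge0 u : 0 <= enorm u.
Proof. exact: sqrtr_ge0. Qed.
Lemma enorm_sq u : enorm u ^+ 2 = dotp u u.
Proof. by rewrite sqr_sqrtr // dotpp_ge0. Qed.
Lemma dotp_delta u (j : 'I_k) : dotp u (delta_mx 0 j) = u 0 j.
Proof.
rewrite /dotp (bigD1 j) //= big1 ?addr0; first by rewrite mxE !eqxx mulr1.
by move=> i /negbTE ij; rewrite mxE ij andbF mulr0.
Qed.
Lemma CS2 u v : dotp u v ^+ 2 <= dotp u u * dotp v v.
Proof.
have [v0|vpos] := eqVneq (dotp v v) 0.
  by have -> := dotpp_eq0 v0; rewrite dotpC !dotp0l mulr0 expr0n.
have vp : 0 < dotp v v by rewrite lt_def vpos dotpp_ge0.
have := dotpp_ge0 (dotp v v *: u - dotp u v *: v).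
rewrite !(dotpBl, dotpBr, dotpZl, dotpZr) (dotpC v u) => H.
have H2 : 0 <= dotp v v * (dotp v v * dotp u u - dotp u v ^+ 2) by lra.
rewrite pmulr_rge0 // in H2; lra.
Qed.
Lemma CS u v : dotp u v <= enorm u * enorm v.
Proof.
have := CS2 u v; rewrite -!enorm_sq -exprMn => H.
have := enorm_ge0 u; have := enorm_ge0 v => h1 h2.
have h3 : 0 <= enorm u * enorm v by apply: mulr_ge0.
nra.
Qed.
End Dot.
Lemma key1 (R : realType) (k s a E w t : R) :
  0 < k -> E ^+ 2 <= k ^+ 2 * (t ^+ 2 - a ^+ 2) -> s ^+ 2 + w ^+ 2 = t ^+ 2 ->
  k * s * a + w * E <= k * t ^+ 2.
Proof.
move=> k0 hE hs.
have h1 : 0 <= k^+2 * (s - a)^+2 + (k * w - E)^+2 by apply: addr_ge0; [apply: mulr_ge0|]; apply: sqr_ge0.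
have h2 : k * (k * s * a + w * E) <= k * (k * t ^+ 2) by nra.
by rewrite ler_pM2l in h2.
Qed.

Lemma key2 (R : realType) (c k s w t : R) :
  0 < k -> c ^+ 2 + k ^+ 2 = 1 -> s ^+ 2 + w ^+ 2 = t ^+ 2 -> 0 <= w -> 0 < t ->
  s < c * t -> 0 <= c * w - k * s.
Proof.
move=> k0 ck sw w0 t0 st.
have h : (c * w - k * s) * (c * w + k * s) = c^+2 * t^+2 - s^+2.
  rewrite (_ : (c * w - k * s) * (c * w + k * s) = c^+2 * w^+2 - k^+2 * s^+2); last by ring.
  have -> : k^+2 = 1 - c^+2 by lra.
  rewrite (_ : w^+2 = t^+2 - s^+2); [ring|lra].
have [s0|s0] := leP s 0; have [c0|c0] := leP c 0.
- have h0 : 0 <= - (c * t) by rewrite oppr_ge0 mulr_le0_ge0 // ltW.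
  have h1 : c^+2 * t^+2 < s^+2.
    have : 0 < (c * t - s) * (- c * t - s) by apply: mulr_gt0; lra.
    move=> H; nra.
  have h2 : c * w + k * s <= 0 by nra.
  nra.
- nra.
- have h1 : s^+2 < c^+2 * t^+2 by nra.
  nra.
- have h1 : s^+2 < c^+2 * t^+2 by nra.
  have h2 : 0 < c * w + k * s by nra.
  nra.
Qed.

Lemma enormZ (R : realType) k (s : R) (u : 'rV[R]_k) : enorm (s *: u) = `|s| * enorm u.
Proof. by rewrite /enorm dotpZl dotpZr mulrA -expr2 sqrtrM ?sqr_ge0 // sqrtr_sqr. Qed.

Lemma dotp_comb2 (R : realType) k (p q : R) (u v : 'rV[R]_k) :
  dotp (p *: u + q *: v) (p *: u + q *: v) = p ^+ 2 * dotp u u + 2 * p * q * dotp u v + q ^+ 2 * dotp v v.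
Proof. rewrite !(dotpDl, dotpDr, dotpZl, dotpZr) (dotpC v u); ring. Qed.
Lemma dotp_comb1 (R : realType) k (p q : R) (u v w : 'rV[R]_k) :
  dotp w (p *: u + q *: v) = p * dotp w u + q * dotp w v.
Proof. by rewrite !(dotpDr, dotpZr). Qed.

Lemma enormN (R : realType) k (u : 'rV[R]_k) : enorm (- u) = enorm u.
Proof. by rewrite /enorm dotpNl dotpNr opprK. Qed.

Lemma quot_of_derive (R : realType) (f : R -> R) (x df : R) : is_derive x 1 f df ->
  (fun h : R => h^-1 * (f (h + x) - f x)) @ 0^' --> df.
Proof.
move=> [H1 H2]; rewrite -H2.
suff -> : (fun h : R => h^-1 * (f (h + x) - f x)) = (fun h => h^-1 *: ((f \o shift x) (h *: 1) - f x)) by [].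
by apply/funext => h /=; rewrite /shift scaler1.
Qed.

Lemma sq_quot (R : realType) (F L U : R -> R) (ell : R) :
  (\forall h \near 0, L h <= F h <= U h) -> L 0 = F 0 -> U 0 = F 0 ->
  (fun h => h^-1 * (L h - L 0)) @ 0^' --> ell ->
  (fun h => h^-1 * (U h - U 0)) @ 0^' --> ell ->
  (fun h => h^-1 * (F h - F 0)) @ 0^' --> ell.
Proof.
move=> HB L0 U0 /cvgrPdist_lt hL /cvgrPdist_lt hU; apply/cvgrPdist_lt => e e0.
have HB' : \forall h \near 0^', L h <= F h <= U h by exact: nbhs_dnbhs HB.
near=> h.
have /andP[h1 h2] : L h <= F h <= U h by near: h.
have hl : `|ell - h^-1 * (L h - L 0)| < e by near: h; exact: hL.
have hu : `|ell - h^-1 * (U h - U 0)| < e by near: h; exact: hU.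
have hne : h != 0 by near: h; exact: nbhs_dnbhs_neq.
rewrite L0 in hl; rewrite U0 in hu.
move: hl hu; rewrite !ltr_norml => /andP[hl1 hl2] /andP[hu1 hu2].
have eL : h^-1 * (F h - F 0) - h^-1 * (L h - F 0) = h^-1 * (F h - L h) by ring.
have eU : h^-1 * (U h - F 0) - h^-1 * (F h - F 0) = h^-1 * (U h - F h) by ring.
have [hp|hn] := ltrP 0 h.
- have ip : 0 <= h^-1 by rewrite invr_ge0 ltW.
  have := mulr_ge0 ip ((ltac:(by rewrite subr_ge0) : 0 <= F h - L h)); have := mulr_ge0 ip ((ltac:(by rewrite subr_ge0) : 0 <= U h - F h)).
  lra.
- have ip : h^-1 <= 0 by rewrite invr_le0.
  have := mulr_le0_ge0 ip ((ltac:(by rewrite subr_ge0) : 0 <= F h - L h)); have := mulr_le0_ge0 ip ((ltac:(by rewrite subr_ge0) : 0 <= U h - F h)).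
  lra.
Unshelve. all: end_near.
Qed.

Lemma deriv_sqrt_quad (R : realType) (A B C : R) : 0 < C ->
  is_derive (0:R) 1 (fun h => Num.sqrt (A * h ^+ 2 + B * h + C)) (B / (2 * Num.sqrt C)).
Proof.
move=> C0.
pose p : {poly R} := A *: 'X^2 + B *: 'X + C%:P.
have -> : (fun h => Num.sqrt (A * h ^+ 2 + B * h + C)) = Num.sqrt \o horner p.
  by apply/funext => h /=; rewrite /p !hornerE.
have p0 : p.[0] = C.
  by rewrite /p !hornerE /= !mulr0 add0r.
apply: is_derive_eq.
  apply: (is_derive1_comp _ (is_derive_poly p 0)).
  by rewrite p0; exact: is_derive1_sqrt.
have dp : (deriv p).[0] = B.
  rewrite /p !(poly.derivD, poly.derivZ, poly.derivC, poly.derivX, poly.derivXn) !hornerE /=.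
  by [].
by rewrite dp mulrC.
Qed.

Lemma deriv_lin_sqrt (R : realType) (c0 c1 kk A B C : R) : 0 < C ->
  is_derive (0:R) 1 (fun h => c1 * h + c0 + kk * Num.sqrt (A * h ^+ 2 + B * h + C))
    (c1 + kk * (B / (2 * Num.sqrt C))).
Proof.
move=> C0.
pose p : {poly R} := c1 *: 'X + c0%:P.
have -> : (fun h => c1 * h + c0 + kk * Num.sqrt (A * h ^+ 2 + B * h + C)) =
   horner p + kk *: (fun h => Num.sqrt (A * h ^+ 2 + B * h + C)).
  by apply/funext => h; rewrite !fctE /p !hornerE.
apply: is_derive_eq.
  apply: is_deriveD.
  apply: is_deriveZ; exact: deriv_sqrt_quad.
rewrite /p !(poly.derivD, poly.derivZ, poly.derivC, poly.derivX) !hornerE.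
change (c1 + kk * (B / (2 * Num.sqrt C)) = c1 + kk * B * (2 * Num.sqrt C)^-1).
by rewrite mulrA.
Qed.


Lemma key4 (R : realType) (k q rho t al E : R) : 0 < k -> 0 < q -> q ^+ 2 + rho ^+ 2 = 1 -> 0 < t ->
  E ^+ 2 <= k ^+ 2 * (t ^+ 2 - al ^+ 2) -> q * E <= k * (t + rho * al).
Proof.
move=> k0 q0 qr t0 hE.
have k2 : 0 < k ^+ 2 by rewrite exprn_gt0.
have h1 : al ^+ 2 <= t ^+ 2.
  have : 0 <= k ^+ 2 * (t ^+ 2 - al ^+ 2) by apply: le_trans hE; apply: sqr_ge0.
  by rewrite pmulr_rge0 // subr_ge0.
have r1 : rho ^+ 2 <= 1 by have := sqr_ge0 q; lra.
have h2 : (rho * al) ^+ 2 <= t ^+ 2.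
  rewrite exprMn; apply: le_trans h1; rewrite ler_piMl ?sqr_ge0 //.
have h2' : 0 <= t + rho * al.
  have : `|rho * al| <= t.
    by rewrite -(ger0_norm (ltW t0)) -ler_sqr ?nnegrE ?normr_ge0 // !real_normK ?num_real.
  rewrite ler_norml => /andP[? ?]; lra.
have h3 : (q * E) ^+ 2 <= (k * (t + rho * al)) ^+ 2.
  have id : (k * (t + rho * al)) ^+ 2 = q ^+ 2 * (k ^+ 2 * (t ^+ 2 - al ^+ 2)) + k ^+ 2 * (rho * t + al) ^+ 2.
    have -> : q ^+ 2 = 1 - rho ^+ 2 by lra.
    ring.
  rewrite id exprMn; apply: ler_wpDr; first by apply: mulr_ge0; [exact: ltW|exact: sqr_ge0].
  by rewrite ler_wpM2l // sqr_ge0.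
have h4 : 0 <= k * (t + rho * al) by apply: mulr_ge0 => //; exact: ltW.
nra.
Qed.

Section Phi.
Context {R : realType} {n m : nat} (a lam : 'rV[R]_n) (d : 'rV[R]_m).
Context (ha : enorm a = 1) (hd : enorm d < 1) (hlam : enorm lam = 1).

Let Pset (y : 'rV[R]_m) := [set x : 'rV[R]_n | enorm x <= enorm y /\ dotp a x + dotp d y <= 0].

Lemma aa1 : dotp a a = 1. Proof. by rewrite -enorm_sq ha expr1n. Qed.
Lemma ll1 : dotp lam lam = 1. Proof. by rewrite -enorm_sq hlam expr1n. Qed.
Lemma dd1 : dotp d d < 1.
Proof. rewrite -enorm_sq; have := enorm_ge0 d => h; have := hd; nra. Qed.
Lemma dy_le y : `|dotp d y| <= enorm y.
Proof.
have h1 := CS d y; have h2 := CS (- d) y.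
rewrite dotpNl enormN in h2.
have h3 := enorm_ge0 y; have h4 := enorm_ge0 d; have h5 := hd.
rewrite ler_norml; apply/andP; split; nra.
Qed.
Lemma dy_sq y : dotp d y ^+ 2 <= dotp y y.
Proof.
have h1 := CS2 d y; have h2 : 0 <= 1 - dotp d d by have := dd1; lra.
have h3 := mulr_ge0 h2 (dotpp_ge0 y); lra.
Qed.

Lemma Pset_w y : Pset y ((- enorm y) *: a).
Proof.
split; first by rewrite enormZ ha mulr1 normrN ger0_norm // enorm_ge0.
rewrite dotpZr aa1 mulr1; have := dy_le y; rewrite ler_norml => /andP[_ h]; lra.
Qed.

Lemma phi_E y : phi a lam d y = sup [set dotp lam x | x in Pset y].
Proof. by []. Qed.

Lemma in_ub y x : Pset y x -> dotp lam x <= enorm y.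
Proof.
move=> [h1 _]; apply: le_trans (CS lam x) _; rewrite hlam mul1r //.
Qed.

Lemma phi_le y B : (forall x, Pset y x -> dotp lam x <= B) -> phi a lam d y <= B.
Proof.
move=> H; rewrite phi_E; apply: ge_sup.
  by exists (dotp lam ((- enorm y) *: a)); exists ((- enorm y) *: a) => //; apply: Pset_w.
by move=> z [x Px <-]; apply: H.
Qed.

Lemma phi_ge y x : Pset y x -> dotp lam x <= phi a lam d y.
Proof.
move=> Px; rewrite phi_E; apply: ub_le_sup; last by exists x.
by exists (enorm y) => z [x' Px' <-]; apply: in_ub.
Qed.

Lemma phi_le_norm y : phi a lam d y <= enorm y.
Proof. by apply: phi_le => x; apply: in_ub. Qed.

Lemma phi_ge_norm y : dotp lam a * enorm y + dotp d y <= 0 -> enorm y <= phi a lam d y.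
Proof.
move=> H; have := @phi_ge y (enorm y *: lam).
rewrite dotpZr ll1 mulr1; apply; split.
  by rewrite enormZ hlam mulr1 ger0_norm // enorm_ge0.
by rewrite dotpZr (dotpC a) mulrC.
Qed.

Lemma key3 (c k s w t al E : R) : 0 < k -> c ^+ 2 + k ^+ 2 = 1 -> s ^+ 2 + w ^+ 2 = t ^+ 2 ->
  0 < w -> 0 < t -> s < c * t -> E ^+ 2 <= k ^+ 2 * (t ^+ 2 - al ^+ 2) -> al <= s ->
  c * al + E <= c * s + k * w.
Proof.
move=> k0 ck sw w0 t0 st hE als.
have h1 := key1 k0 hE sw.
have h2 := key2 k0 ck sw (ltW w0) t0 st.
have h3 : 0 <= (c * w - k * s) * (s - al) by apply: mulr_ge0 => //; lra.
have h4 : w * (c * al + E) <= w * (c * s + k * w) by nra.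
by rewrite ler_pM2l in h4.
Qed.

Context (hla : lam != a) (hlma : lam != - a).
Let c := dotp lam a.
Let k := Num.sqrt (1 - c ^+ 2).
Let mu := lam - c *: a.

Lemma c_lt1 : c ^+ 2 < 1.
Proof.
have h := CS2 lam a; rewrite ll1 aa1 mulr1 -/c in h.
rewrite lt_def h andbT; apply/negP => /eqP c1.
have [ce|ce] : c = 1 \/ c = -1.
  have : (c - 1) * (c + 1) = 0 by rewrite -subr_sqr -c1 expr1n subrr.
  by move/eqP; rewrite mulf_eq0 subr_eq0 addr_eq0 => /orP[/eqP|/eqP]; [left|right].
- have : dotp (lam - a) (lam - a) = 0.
    by rewrite !(dotpBl, dotpBr) ll1 aa1 (dotpC a lam) -/c ce; ring.
  by move/dotpp_eq0/eqP; rewrite subr_eq0 (negbTE hla).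
- have : dotp (lam + a) (lam + a) = 0.
    by rewrite !(dotpDl, dotpDr) ll1 aa1 (dotpC a lam) -/c ce; ring.
  by move/dotpp_eq0/eqP; rewrite addr_eq0 (negbTE hlma).
Qed.

Lemma k_pos : 0 < k.
Proof. by rewrite sqrtr_gt0 subr_gt0 c_lt1. Qed.
Lemma k_sq : k ^+ 2 = 1 - c ^+ 2.
Proof. by rewrite sqr_sqrtr // subr_ge0 ltW // c_lt1. Qed.
Lemma mu_a : dotp mu a = 0.
Proof. by rewrite dotpBl dotpZl aa1 mulr1 -/c subrr. Qed.
Lemma a_mu : dotp a mu = 0.
Proof. by rewrite dotpC mu_a. Qed.
Lemma mu_mu : dotp mu mu = k ^+ 2.
Proof. by rewrite k_sq {1}/mu dotpBl dotpZl a_mu mulr0 subr0 dotpBr dotpZr ll1 -/c; ring. Qed.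
Lemma lam_mu : dotp lam mu = k ^+ 2.
Proof. by rewrite k_sq dotpBr dotpZr ll1 -/c; ring. Qed.
Lemma lam_dec x : dotp lam x = c * dotp a x + dotp mu x.
Proof. by rewrite /mu dotpBl dotpZl; ring. Qed.

Definition f2 (y : 'rV[R]_m) := - c * dotp d y + k * Num.sqrt (dotp y y - dotp d y ^+ 2).

Lemma w_sq y : Num.sqrt (dotp y y - dotp d y ^+ 2) ^+ 2 = dotp y y - dotp d y ^+ 2.
Proof. by rewrite sqr_sqrtr // subr_ge0 dy_sq. Qed.

Lemma f2_le_phi y : f2 y <= phi a lam d y.
Proof.
set s := - dotp d y; set w := Num.sqrt (dotp y y - dotp d y ^+ 2).
have kp := k_pos.
set x := s *: a + (w / k) *: mu.
have -> : f2 y = dotp lam x.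
  rewrite /x dotp_comb1 lam_mu /f2 -/w -/c /s.
  by field; rewrite gt_eqF.
apply: phi_ge; split.
  rewrite /enorm ler_sqrt ?dotpp_ge0 //.
  rewrite /x dotp_comb2 aa1 a_mu mu_mu.
  have hw := w_sq y; rewrite -/w in hw.
  have -> : (w / k) ^+ 2 * k ^+ 2 = w ^+ 2 by field; rewrite gt_eqF.
  rewrite hw /s; lra.
rewrite /x dotp_comb1 aa1 a_mu /s; lra.
Qed.

Lemma phi_le_f2 y : 0 < c * enorm y + dotp d y -> phi a lam d y <= f2 y.
Proof.
move=> H; apply: phi_le => x [hx1 hx2].
set s := - dotp d y; set w := Num.sqrt (dotp y y - dotp d y ^+ 2).
set t := enorm y; set al := dotp a x; set E := dotp mu x.
have kp := k_pos.
have ty : t ^+ 2 = dotp y y by rewrite enorm_sq.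
have t0 : 0 < t.
  rewrite lt_def enorm_ge0 andbT; apply/negP => /eqP t0.
  have /dotpp_eq0 y0 : dotp y y = 0 by rewrite -ty t0 expr0n.
  by move: H; rewrite -/t t0 y0 dotpC dotp0l mulr0 addr0 ltxx.
have sw : s ^+ 2 + w ^+ 2 = t ^+ 2 by rewrite w_sq ty /s sqrrN; ring.
have w0 : 0 < w.
  rewrite sqrtr_gt0 subr_gt0.
  have h1 := CS2 d y; have h2 := dd1; have h3 : 0 < dotp y y by rewrite -ty exprn_gt0.
  nra.
have st : s < c * t by rewrite /s /t; lra.
have hE : E ^+ 2 <= k ^+ 2 * (t ^+ 2 - al ^+ 2).
  have h := CS2 mu (x - al *: a).
  rewrite dotpBr dotpZr mu_a mulr0 subr0 mu_mu -/E in h.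
  rewrite !(dotpBl, dotpBr, dotpZl, dotpZr) aa1 (dotpC x a) -/al in h.
  have hxx : dotp x x <= t ^+ 2.
    by rewrite /t -enorm_sq; have := enorm_ge0 x; nra.
  have kk : 0 <= k ^+ 2 by apply: sqr_ge0.
  nra.
have als : al <= s by rewrite /s /al; lra.
rewrite lam_dec -/al -/E /f2 -/w.
have := key3 kp _ sw w0 t0 st hE als.
rewrite k_sq; have := c_lt1 => h1 h2; rewrite /s in h2.
have := h2 ltac:(ring); lra.
Qed.

Lemma quot0 (f : R -> R) (df : R) : is_derive (0:R) 1 f df ->
  (fun h : R => h^-1 * (f h - f 0)) @ 0^' --> df.
Proof.
move=> H; have := quot_of_derive H.
by under eq_fun do rewrite addr0.
Qed.

Lemma cont0 (f : R -> R) (df : R) : is_derive (0:R) 1 f df -> f @ 0 --> f 0.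
Proof.
move=> [H _]; apply: differentiable_continuous.
exact/derivable1_diffP.
Qed.

Section Line.
Context (beta : 'rV[R]_m) (hb : enorm beta = 1) (j : 'I_m).
Let e : 'rV[R]_m := delta_mx 0 j.
Let b := beta 0 j.
Let dj := d 0 j.
Let rho := dotp d beta.

Lemma bb1 : dotp beta beta = 1. Proof. by rewrite -enorm_sq hb expr1n. Qed.
Lemma ee1 : dotp e e = 1. Proof. by rewrite dotp_delta mxE !eqxx. Qed.

Lemma LL1 h : dotp (h *: e + beta) (h *: e + beta) = 1 * h ^+ 2 + (2 * b) * h + 1.
Proof.
rewrite !(dotpDl, dotpDr, dotpZl, dotpZr) ee1 bb1 (dotpC e beta) dotp_delta -/b; ring.
Qed.
Lemma LL2 h : dotp d (h *: e + beta) = dj * h + rho.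
Proof. by rewrite dotpDr dotpZr dotp_delta -/dj -/rho mulrC. Qed.

Lemma rho_lt1 : 0 < 1 - rho ^+ 2.
Proof.
have h1 := CS2 d beta; rewrite bb1 mulr1 in h1; have := dd1; rewrite /rho; lra.
Qed.

Let T h := Num.sqrt (1 * h ^+ 2 + (2 * b) * h + 1).
Let F h := (- c * dj) * h + (- c * rho) +
   k * Num.sqrt ((1 - dj ^+ 2) * h ^+ 2 + (2 * b - 2 * dj * rho) * h + (1 - rho ^+ 2)).
Let Phi h := phi a lam d (h *: e + beta).

Lemma T_E h : enorm (h *: e + beta) = T h.
Proof. by rewrite /enorm LL1. Qed.
Lemma F_E h : f2 (h *: e + beta) = F h.
Proof.
rewrite /f2 LL1 LL2 /F; congr (_ + _); first ring.
congr (_ * Num.sqrt _); ring.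
Qed.

Lemma T_der : is_derive (0:R) 1 T b.
Proof.
apply: is_derive_eq; first exact: deriv_sqrt_quad.
by rewrite sqrtr1 mulr1 mulrC mulKf // pnatr_eq0.
Qed.

Let q := Num.sqrt (1 - rho ^+ 2).
Let ellF := - c * dj + k * ((2 * b - 2 * dj * rho) / (2 * q)).

Lemma F_der : is_derive (0:R) 1 F ellF.
Proof. exact: deriv_lin_sqrt rho_lt1. Qed.

Lemma dphi_val ell : (fun h => h^-1 * (Phi h - Phi 0)) @ 0^' --> ell ->
  derive (phi a lam d) beta e = ell.
Proof.
move=> H; rewrite /derive; apply: (cvg_lim (@Rhausdorff R)).
apply: (cvg_trans _ H); apply: near_eq_cvg; apply: nearW => h.
by rewrite /Phi /= /shift scale0r add0r.
Qed.


Lemma Phi0 : Phi 0 = phi a lam d beta.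
Proof. by rewrite /Phi scale0r add0r. Qed.
Lemma Phi_le_T h : Phi h <= T h.
Proof. by rewrite -T_E; apply: phi_le_norm. Qed.
Lemma F_le_Phi h : F h <= Phi h.
Proof. by rewrite -F_E; apply: f2_le_phi. Qed.

Let G h := dj * h + rho + c * Num.sqrt (1 * h ^+ 2 + (2 * b) * h + 1).
Lemma G_der : is_derive (0:R) 1 G (dj + c * ((2 * b) / (2 * Num.sqrt 1))).
Proof. exact: deriv_lin_sqrt ltr01. Qed.
Lemma G_E h : G h = c * enorm (h *: e + beta) + dotp d (h *: e + beta).
Proof. by rewrite T_E LL2 /G /T; ring. Qed.
Lemma G0 : G 0 = c + rho.
Proof. by rewrite /G expr0n /= !(mulr0, mul0r, addr0, add0r) sqrtr1 mulr1 addrC. Qed.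
Lemma T0 : T 0 = 1.
Proof. by rewrite /T expr0n /= !(mulr0, mul0r, addr0, add0r) sqrtr1. Qed.

Lemma phiA : c + rho <= 0 -> phi a lam d beta = 1.
Proof.
move=> H; apply/le_anti/andP; split; first by rewrite -hb phi_le_norm.
by rewrite -{1}hb; apply: phi_ge_norm; rewrite hb mulr1.
Qed.

Lemma dA : c + rho <= 0 -> derive (phi a lam d) beta e = b.
Proof.
move=> H; apply: dphi_val.
have hT := quot0 T_der.
have [Hs|He] := ltrP (c + rho) 0.
- have TP : T 0 = Phi 0 by rewrite T0 Phi0 phiA.
  apply: (@sq_quot _ Phi T T); [|exact: TP|exact: TP|exact: hT|exact: hT].
  have HG := cvgr_lt _ (cont0 G_der).
  rewrite G0 in HG; have {}HG := HG _ 0 Hs.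
  near=> h; have Gh : G h < 0 by near: h; exact: HG.
  rewrite Phi_le_T andbT -T_E; apply: phi_ge_norm; rewrite -G_E; exact: ltW.
- have Hc : c + rho = 0 by lra.
  have rc : rho = - c by lra.
  have qk : q = k by rewrite /q /k rc sqrrN.
  have FP : F 0 = Phi 0.
    rewrite Phi0 phiA ?Hc // /F expr0n /= !(mulr0, mul0r, addr0, add0r).
    rewrite -/q qk rc mulrNN -!expr2 k_sq; lra.
  have TP : T 0 = Phi 0 by rewrite T0 Phi0 phiA // Hc.
  have ellb : ellF = b.
    by rewrite /ellF qk rc; field; rewrite gt_eqF // k_pos.
  apply: (@sq_quot _ Phi F T); [|exact: FP|exact: TP|rewrite -ellb; exact: quot0 F_der|exact: hT].
  near=> h; by rewrite Phi_le_T F_le_Phi.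
Unshelve. all: end_near.
Qed.

Lemma phiB : 0 < c + rho -> phi a lam d beta = - c * rho + k * q.
Proof.
move=> H; have e1 : f2 beta = - c * rho + k * q by rewrite /f2 bb1.
apply/le_anti/andP; split; first by rewrite -e1; apply: phi_le_f2; rewrite hb mulr1.
by rewrite -e1; apply: f2_le_phi.
Qed.

Lemma dB : 0 < c + rho -> derive (phi a lam d) beta e = ellF.
Proof.
move=> H; apply: dphi_val.
have F0 : F 0 = Phi 0.
  by rewrite -F_E Phi0 phiB // /f2 scale0r add0r bb1.
apply: (@sq_quot _ Phi F F); [|exact: F0|exact: F0|exact: quot0 F_der|exact: quot0 F_der].
have HG := cvgr_gt _ (cont0 G_der).
rewrite G0 in HG; have {}HG := HG _ 0 H.
near=> h; have Gh : 0 < G h by near: h; exact: HG.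
rewrite F_le_Phi /= -F_E; apply: phi_le_f2; rewrite -G_E; exact: Gh.
Unshelve. all: end_near.
Qed.
End Line.

Lemma gradA beta : enorm beta = 1 -> c + dotp d beta <= 0 -> grad_phi a lam d beta = beta.
Proof. by move=> hb H; apply/rowP => j; rewrite mxE dA. Qed.

Lemma gradB beta : enorm beta = 1 -> 0 < c + dotp d beta ->
  grad_phi a lam d beta = (- c) *: d +
     (k / Num.sqrt (1 - dotp d beta ^+ 2)) *: (beta - dotp d beta *: d).
Proof.
move=> hb H; apply/rowP => j; rewrite mxE dB // !mxE.
have q0 : Num.sqrt (1 - dotp d beta ^+ 2) != 0 by rewrite gt_eqF // sqrtr_gt0 rho_lt1.
by field.
Qed.
End Phi.

Lemma not_interior (R : realType) n m (C : set ('rV[R]_n * 'rV[R]_m)) (x : 'rV[R]_n) (y : 'rV[R]_m)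
  (v : 'rV[R]_n) : interior C (x, y) ->
  exists s : R, 0 < s /\ C (x - s *: v, y).
Proof.
move=> Hi; case: Hi => -[A B] /= [xA yB] ABP.
move/nbhs_ballP: xA => [eps /= eps0 Hb].
pose s := eps / (`|v| + 1).
have s0 : 0 < s by rewrite divr_gt0 // ltr_wpDl.
exists s; split => //; apply: (ABP (_, _)); split => //=; last exact: nbhs_singleton.
apply: Hb; rewrite -ball_normE /= opprB addrC subrK normrZ gtr0_norm //.
have nv := normr_ge0 v; rewrite /s mulrAC ltr_pdivrMr ?ltr_wpDl //; nra.
Qed.

Unset Implicit Arguments.

Theorem theorem9 (R : realType) (n m : nat) (a lam : 'rV[R]_n) (d : 'rV[R]_m)
  (hn : (0 < n)%N) (hm : (0 < m)%N)
  (ha : enorm a = 1) (hd : enorm d < 1) (hlam : enorm lam = 1)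
  (hla : lam != a) (hlma : lam != - a) :
  interior (Cset a lam d) `&` Sset a d = set0.
Proof.
apply/seteqP; split => [[x y] [Hi [hxy hS]]|z] //=.
rewrite /= in hxy hS.
set t := enorm y.
have ty : t ^+ 2 = dotp y y by rewrite enorm_sq.
have hax : `|dotp a x| <= enorm x.
  have h1 := CS a x; have h2 := CS (- a) x.
  rewrite dotpNl enormN ha mul1r in h2; rewrite ha mul1r in h1.
  by rewrite ler_norml; apply/andP; split; lra.
have hdy := dy_le hd y.
have t0 : 0 < t.
  move: hax hdy; rewrite !ler_norml => /andP[? ?] /andP[? ?]; rewrite /t in hxy *; lra.
set beta := t^-1 *: y.
have hb : enorm beta = 1.
  by rewrite enormZ ger0_norm ?invr_ge0 ?ltW // mulVf // gt_eqF.
have dyb : dotp d y = t * dotp d beta.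
  by rewrite dotpZr mulrA mulfV ?gt_eqF // mul1r.
have byb : dotp beta y = t.
  by rewrite dotpZl -ty expr2 mulrA mulVf ?gt_eqF // mul1r.
have hlx : dotp lam x <= t.
  by apply: le_trans (CS lam x) _; rewrite hlam mul1r.
have key : rfun a lam d beta <= - dotp lam x + dotp (grad_phi a lam d beta) y.
  rewrite /rfun; case: ifP => H.
    by rewrite gradA // byb; lra.
  have Hp : 0 < dotp lam a + dotp d beta by rewrite ltNge H.
  rewrite gradB // phiB //.
  set c := dotp lam a; set rho := dotp d beta.
  set k := Num.sqrt (1 - c ^+ 2); set q := Num.sqrt (1 - rho ^+ 2).
  have kp : 0 < k := k_pos ha hlam hla hlma.
  have ksq : k ^+ 2 = 1 - c ^+ 2 := k_sq ha hlam hla hlma.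
  have qp : 0 < q by rewrite sqrtr_gt0 rho_lt1.
  have qsq : q ^+ 2 = 1 - rho ^+ 2 by rewrite sqr_sqrtr // ltW // rho_lt1.
  set al := dotp a x.
  set mu := lam - c *: a.
  set E := dotp mu x.
  have hal : al = - 1 - t * rho by rewrite /al -dyb; lra.
  have hE : E ^+ 2 <= k ^+ 2 * (t ^+ 2 - al ^+ 2).
    have h := CS2 mu (x - al *: a).
    rewrite dotpBr dotpZr mu_a // mulr0 subr0 mu_mu // -/k -/E in h.
    rewrite !(dotpBl, dotpBr, dotpZl, dotpZr) (aa1 ha) (dotpC x a) -/al in h.
    have hxx : dotp x x <= t ^+ 2.
      by rewrite -enorm_sq !expr2; apply: ler_pM => //; exact: enorm_ge0.
    have kk : 0 <= k ^+ 2 by apply: sqr_ge0.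
    nra.
  have K4 := key4 kp qp (ltac:(lra) : q ^+ 2 + rho ^+ 2 = 1) t0 hE.
  rewrite (lam_dec a lam x) -/c -/al -/mu -/E.
  rewrite dotpDl dotpZl dotpZl dotpBl dotpZl byb dyb.
  have eq1 : (rho + c * (- c * rho + k * q)) / (- c * rho + k * q + rho * c) = (k * rho + c * q) / q.
    have -> : rho + c * (- c * rho + k * q) = k * (k * rho + c * q).
      have e : k * (k * rho + c * q) = k ^+ 2 * rho + c * k * q by ring.
      by rewrite e ksq; ring.
    have kn : k != 0 by rewrite gt_eqF.
    have qn : q != 0 by rewrite gt_eqF.
    have -> : - c * rho + k * q + rho * c = k * q by ring.
    by field; rewrite ?kn ?qn.
  have eq2 : k / q * (t - rho * (t * rho)) = k * t * q.
    have -> : t - rho * (t * rho) = t * q ^+ 2 by rewrite qsq; ring.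
    by field; rewrite gt_eqF.
  rewrite eq1 eq2 ler_pdivrMr //.
  rewrite hal in K4.
  have : k * t * q * q = k * t * (1 - rho ^+ 2) by rewrite -qsq; ring.
  move=> hq; rewrite -/rho hal.
  have -> : (- (c * (-1 - t * rho) + E) + (- c * (t * rho) + k * t * q)) * q =
    c * q - q * E + k * t * q * q by ring.
  have K4' : q * E <= k * t - k * rho - k * t * rho ^+ 2.
    by apply: le_trans K4 _; rewrite le_eqVlt; apply/orP; left; apply/eqP; ring.
  rewrite hq; lra.
have [s [s0 Cs]] := not_interior lam Hi.
have := Cs beta hb.
rewrite /= dotpBr dotpZr -enorm_sq hlam expr1n mulr1.
lra.
Qed.
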